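(* Let $k,\ell,n$ be integers with $2\le \ell<k/2$ and $n\ge1$, and let the sets $A_i,B_i,U_i$, $V$ and the $k$-graph $H_1^2$ be as in the context. Then every $(\ell,k)$-path all of whose edges belong to $H_1^2$ has at most two edges.
   Context: Let $\{A_i,B_i: i=1,\dots,2n\}$ be $4n$ pairwise disjoint finite sets with $|A_i|=2\lfloor k/2\rfloor+\ell$ for $1\le i\le n$ and $|A_i|=2k-2\ell-3$ for $n+1\le i\le 2n$. Put $U_i=A_i\cup B_i$ and $V=\bigcup_{i=1}^{2n}U_i$. For $S\subseteq V$ let $tr(S)=\{i: S\cap U_i\ne\emptyset\}$. Define $H_1^2$ as the set of all $k$-subsets $e\subseteq V$ for which there is $i\in\{1,\dots,n\}$ with $tr(e)=\{i,n+i\}$, $|A_i\cap e|=\ell+1$ and $|A_{n+i}\cap e|=k-\ell-1$. An $(\ell,k)$-path is a $k$-graph with distinct vertices $v_1,\dots,v_s$, $s\equiv\ell\pmod{k-\ell}$, $s\ge k$, and edges $\{v_{i(k-\ell)+1},\dots,v_{i(k-\ell)+k}\}$, $i=0,\dots,(s-k)/(k-\ell)$. *)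

(* Defs.v *)
From mathcomp Require Import all_boot all_order.
Set Implicit Arguments. Unset Strict Implicit. Unset Printing Implicit Defensive.

Definition pairwise_disjoint_AB (T : finType) (n : nat) (A B : nat -> {set T}) :=
  (forall i j, 1 <= i <= 2 * n -> 1 <= j <= 2 * n -> i != j ->
     [disjoint A i & A j] /\ [disjoint B i & B j]) /\
  (forall i j, 1 <= i <= 2 * n -> 1 <= j <= 2 * n -> [disjoint A i & B j]).

Definition U (T : finType) (A B : nat -> {set T}) (i : nat) : {set T} := A i :|: B i.

Definition Vset (T : finType) (n : nat) (A B : nat -> {set T}) : {set T} :=
  \bigcup_(1 <= i < (2 * n).+1) U A B i.

Definition tr (T : finType) (n : nat) (A B : nat -> {set T}) (S : {set T}) : pred nat :=
  fun i => (1 <= i <= 2 * n) && (S :&: U A B i != set0).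

Definition H12 (T : finType) (n k l : nat) (A B : nat -> {set T}) (e : {set T}) : Prop :=
  e \subset Vset n A B /\ #|e| = k /\
  exists i, 1 <= i <= n /\
    (forall j, tr n A B e j <-> (j = i \/ j = n + i)) /\
    #|A i :&: e| = l.+1 /\ #|A (n + i) :&: e| = k - l - 1.

Definition is_lk_path_seq (T : finType) (l k : nat) (v : seq T) : Prop :=
  uniq v /\ k <= size v /\ size v %% (k - l) = l %% (k - l).

Definition num_edges (l k : nat) (s : nat) : nat := (s - k) %/ (k - l) + 1.

(* the i-th edge (i = 0, ..., (s-k)/(k-l)):
   {v_{i(k-l)+1}, ..., v_{i(k-l)+k}} *)
Definition path_edge (T : finType) (l k : nat) (v : seq T) (i : nat) : {set T} :=
  [set x in take k (drop (i * (k - l)) v)].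

(* Main.v *)
Require Import Defs.
From mathcomp Require Import all_boot all_order.
From mathcomp Require Import zify.

Lemma H12_sub (T : finType) (k l n : nat) (A B : nat -> {set T}) e :
  l < k -> 1 <= n -> pairwise_disjoint_AB n A B -> H12 n k l A B e ->
  exists i, [/\ 1 <= i <= n, e \subset A i :|: A (n + i) &
                #|A (n + i) :&: e| = k - l - 1].
Proof.
move=> Hlk Hn [HA _] [_ [He [i [Hi [_ [H1 H2]]]]]].
exists i; split => //.
have Hd : [disjoint A i & A (n + i)].
  have Hne : i != n + i by apply/eqP; lia.
  by have [] := HA i (n + i) ltac:(lia) ltac:(lia) Hne.
have Hc : #|(A i :|: A (n + i)) :&: e| = #|e|.
  rewrite setIUl cardsU.
  have -> : (A i :&: e) :&: (A (n + i) :&: e) = set0.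
    apply/setP => x; rewrite !inE.
    case Hx: (x \in A i); rewrite ?andbF ?andFb //=.
    by rewrite (disjointFr Hd Hx) andbF.
  rewrite cards0 H1 H2 He. lia.
have := cardsID (A i :|: A (n + i)) e.
rewrite setIC Hc => Hz.
have : #|e :\: (A i :|: A (n + i))| = 0 by lia.
move/cards0_eq => H0.
apply/subsetP => x xe; apply/negPn/negP => xn.
have : x \in e :\: (A i :|: A (n + i)) by rewrite inE xn xe.
by rewrite H0 inE.
Qed.

Lemma size_aux (T : Type) (s : seq T) p m j :
  j < m -> p + m <= size s -> j < size (take m (drop p s)).
Proof. move=> H1 H2; rewrite size_take_min size_drop; lia. Qed.

Theorem fact3p1 (T : finType) (k l n : nat) (A B : nat -> {set T}) :
  2 <= l -> 2 * l < k -> 1 <= n ->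
  pairwise_disjoint_AB n A B ->
  (forall i, 1 <= i <= n -> #|A i| = 2 * k./2 + l) ->
  (forall i, n + 1 <= i <= 2 * n -> #|A i| = 2 * k - 2 * l - 3) ->
  forall v : seq T,
    is_lk_path_seq l k v ->
    (forall i, i < num_edges l k (size v) -> H12 n k l A B (path_edge l k v i)) ->
    num_edges l k (size v) <= 2.
Proof.
move=> Hl Hk Hn HD HA1 HA2 v [Hu [Hks _]] HE.
rewrite leqNgt; apply/negP => H3.
have Hd : 0 < k - l by lia.
have Hs : 2 * (k - l) <= size v - k.
  have : 2 <= (size v - k) %/ (k - l) by move: H3; rewrite /num_edges; lia.
  by rewrite leq_divRL // mulnC.
have [x0 _] : exists x0 : T, True.
  move: (Hks); case: (v) => [|x t] /=; [lia | by exists x].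
have [i0 [Hi0 S0 C0]] := @H12_sub T k l n A B _ ltac:(lia) Hn HD (HE 0 ltac:(lia)).
have [i1 [Hi1 S1 _]] := @H12_sub T k l n A B _ ltac:(lia) Hn HD (HE 1 ltac:(lia)).
have [i2 [Hi2 S2 C2]] := @H12_sub T k l n A B _ ltac:(lia) Hn HD (HE 2 ltac:(lia)).
have same : forall a b x, 1 <= a <= n -> 1 <= b <= n ->
    x \in A a :|: A (n + a) -> x \in A b :|: A (n + b) -> a = b.
  move=> a b x Ha Hb; rewrite !inE.
  have dis : forall p q, 1 <= p <= 2 * n -> 1 <= q <= 2 * n ->
      x \in A p -> x \in A q -> p = q.
    move=> p q Hp Hq xp xq; apply/eqP/negP => /negP pq.
    have [Hpq _] := HD.1 p q Hp Hq pq.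
    by rewrite (disjointFl Hpq xq) in xp.
  case/orP => xa; case/orP => xb.
  - by apply: (dis a b) => //; lia.
  - have := dis a (n + b) ltac:(lia) ltac:(lia) xa xb; lia.
  - have := dis (n + a) b ltac:(lia) ltac:(lia) xa xb; lia.
  - have := dis (n + a) (n + b) ltac:(lia) ltac:(lia) xa xb; lia.
have e01 : nth x0 v (k - l) \in path_edge l k v 0 /\ nth x0 v (k - l) \in path_edge l k v 1.
  rewrite /path_edge !inE mul0n drop0 mul1n; split.
    rewrite -(nth_take x0 (_ : (k - l) < k)); last by lia.
    by apply: mem_nth; rewrite -(drop0 v); apply: (@size_aux T); lia.
  rewrite -[X in nth x0 v X]addn0 -nth_drop -(nth_take x0 (_ : 0 < k)); last by lia.
  by apply: mem_nth; apply: (@size_aux T); lia.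
have e12 : nth x0 v (2 * (k - l)) \in path_edge l k v 1 /\ nth x0 v (2 * (k - l)) \in path_edge l k v 2.
  rewrite /path_edge !inE mul1n; split.
    rewrite (_ : 2 * (k - l) = (k - l) + (k - l)); last by lia.
    rewrite -nth_drop -(nth_take x0 (_ : (k - l) < k)); last by lia.
    by apply: mem_nth; apply: (@size_aux T); lia.
  rewrite mulnC -[X in nth x0 v X]addn0 -nth_drop -(nth_take x0 (_ : 0 < k)); last by lia.
  by apply: mem_nth; apply: (@size_aux T); lia.
have E01 : i0 = i1.
  by apply: (same _ _ (nth x0 v (k - l))) => //; [apply: (subsetP S0) | apply: (subsetP S1)]; case: e01.
have E12 : i1 = i2.
  by apply: (same _ _ (nth x0 v (2 * (k - l)))) => //; [apply: (subsetP S1) | apply: (subsetP S2)]; case: e12.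
subst i1 i2.
have D02 : forall x, x \in path_edge l k v 0 -> x \in path_edge l k v 2 -> False.
  move=> x; rewrite /path_edge !inE mul0n drop0 => xa xb.
  have xb' : x \in drop k v.
    move: xb => /mem_take.
    rewrite (_ : 2 * (k - l) = (2 * (k - l) - k) + k); last by lia.
    by rewrite -drop_drop => /mem_drop.
  move: Hu; rewrite -(cat_take_drop k v) cat_uniq => /and3P [_ /hasP H _].
  by apply: H; exists x.
set X := A (n + i0).
have Hle : #|X :&: path_edge l k v 0| + #|X :&: path_edge l k v 2| <= #|X|.
  have -> : #|X :&: path_edge l k v 0| + #|X :&: path_edge l k v 2| =
            #|(X :&: path_edge l k v 0) :|: (X :&: path_edge l k v 2)|.
    rewrite cardsU.
    have -> : (X :&: path_edge l k v 0) :&: (X :&: path_edge l k v 2) = set0.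
      apply/setP => x; rewrite !in_setI in_set0.
      case Ha: (x \in path_edge l k v 0); case Hb: (x \in path_edge l k v 2);
        rewrite ?andbF ?andbT ?andFb //=.
      by case: (D02 x Ha Hb).
    by rewrite cards0 subn0.
  by apply: subset_leq_card; apply/subsetP => x; rewrite !inE => /orP [] /andP [].
rewrite C0 C2 /X HA2 in Hle; last by lia.
lia.
Qed.
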